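(* Let $t \geq 1$ and $k \geq 1$ be integers, and let $\mathcal{F}$ be a finite family of finite sets with $\alpha(\mathcal{F}) \geq t$. Let $\mathcal{A}_1, \dots, \mathcal{A}_k$ be cross-$t$-intersecting sub-families of $\mathcal{F}$. If $k \geq \kappa(\mathcal{F},t)$, then \[\sum_{i=1}^k |\mathcal{A}_i| \leq k\, l(\mathcal{F},t) \quad \text{and} \quad \prod_{i=1}^k |\mathcal{A}_i| \leq \left(l(\mathcal{F},t)\right)^k,\] and both bounds are attained if $\mathcal{A}_1 = \dots = \mathcal{A}_k = \mathcal{L}$ for some largest $t$-intersecting sub-family $\mathcal{L}$ of $\mathcal{F}$. Moreover, if $k > \kappa(\mathcal{F},t)$, then in both inequalities equality holds only if $\mathcal{A}_1 = \dots = \mathcal{A}_k = \mathcal{L}$ for some largest $t$-intersecting sub-family $\mathcal{L}$ of $\mathcal{F}$.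
   Context: All sets and families are finite. A set $A$ $t$-intersects a set $B$ if $|A \cap B| \geq t$. A family $\mathcal{A}$ is $t$-intersecting if $|A \cap B| \geq t$ for all $A, B \in \mathcal{A}$ with $A \neq B$. Families $\mathcal{A}_1, \dots, \mathcal{A}_k$ (not necessarily distinct or non-empty) are cross-$t$-intersecting if for all $i \neq j$ in $\{1,\dots,k\}$, $|A \cap B| \geq t$ for every $A \in \mathcal{A}_i$ and $B \in \mathcal{A}_j$. For a non-empty family $\mathcal{F}$: $\alpha(\mathcal{F}) = \max\{|F| : F \in \mathcal{F}\}$; $l(\mathcal{F},t)$ is the size of a largest $t$-intersecting sub-family of $\mathcal{F}$. For a family $\mathcal{A}$, $\mathcal{A}^{t,+} = \{A \in \mathcal{A} : |A \cap B| \geq t \text{ for all } B \in \mathcal{A} \text{ with } B \neq A\}$ and $\mathcal{A}^{t,-} = \mathcal{A} \setminus \mathcal{A}^{t,+}$. For $\mathcal{A} \subseteq \mathcal{F}$, $\beta(\mathcal{F},t,\mathcal{A}) = \frac{l(\mathcal{F},t) - |\mathcal{A}^{t,+}|}{|\mathcal{A}^{t,-}|}$ if $\mathcal{A}^{t,-} \neq \emptyset$, and $\beta(\mathcal{F},t,\mathcal{A}) = \frac{l(\mathcal{F},t)}{|\mathcal{F}|}$ if $\mathcal{A}^{t,-} = \emptyset$. Then $\beta(\mathcal{F},t) = \min\{\beta(\mathcal{F},t,\mathcal{A}) : \mathcal{A} \subseteq \mathcal{F}\}$ (which is positive) and $\kappa(\mathcal{F},t) = 1/\beta(\mathcal{F},t)$.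 *)

(* Defs.v *)
From mathcomp Require Import all_boot all_order all_algebra.
Set Implicit Arguments. Unset Strict Implicit. Unset Printing Implicit Defensive.
Import Order.TTheory GRing.Theory Num.Theory.

Section Defs.
Variable T : finType.
Implicit Types (F A : {set {set T}}) (t : nat).

Definition alpha F : nat := \max_(X in F) #|X|.

Definition t_intersecting t A : bool :=
  [forall X in A, forall Y in A, (X != Y) ==> (t <= #|X :&: Y|)].

Definition lFt F t : nat :=
  \max_(G : {set {set T}} | (G \subset F) && t_intersecting t G) #|G|.

Definition largest_tint F t (L : {set {set T}}) : bool :=
  [&& L \subset F, t_intersecting t L & #|L| == lFt F t].

Definition Aplus t A : {set {set T}} :=
  [set X in A | [forall Y in A, (Y != X) ==> (t <= #|X :&: Y|)]].
Definition Aminus t A : {set {set T}} := A :\: Aplus t A.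

Definition betaA F t A : rat := (
  if Aminus t A != set0 then
    ((lFt F t)%:R - (#|Aplus t A|)%:R) / (#|Aminus t A|)%:R
  else (lFt F t)%:R / (#|F|)%:R)%R.

Definition betaF F t : rat :=
  betaA F t [arg min_(A < (set0 : {set {set T}}) | A \subset F) betaA F t A]%O.

Definition kappa F t : rat := (betaF F t)^-1.

Definition cross_tint t k (As : 'I_k -> {set {set T}}) : Prop :=
  forall i j : 'I_k, i != j ->
    forall X Y : {set T}, X \in As i -> Y \in As j -> t <= #|X :&: Y|.

End Defs.

(* Main.v *)
Require Import Defs.
From mathcomp Require Import all_boot all_order all_algebra.
Import Order.TTheory GRing.Theory Num.Theory.
Set Implicit Arguments. Unset Strict Implicit.
From mathcomp Require Import zify.

Section Aux.
Variable T : finType.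
Implicit Types (F A G : {set {set T}}).

Lemma lFt_ge F t G : G \subset F -> t_intersecting t G -> #|G| <= lFt F t.
Proof. by move=> h1 h2; rewrite /lFt; apply: (leq_bigmax_cond G); rewrite h1 h2. Qed.

Lemma lFt_attain F t : exists L, largest_tint F t L.
Proof.
have P0 : (set0 \subset F) && t_intersecting t (set0 : {set {set T}}).
  by rewrite sub0set; apply/forall_inP => X; rewrite inE.
exists [arg max_(G > set0 | (G \subset F) && t_intersecting t G) #|G|].
rewrite /largest_tint /lFt (bigop.bigmax_eq_arg set0 P0).
by case: arg_maxnP => // G /andP[h1 h2] _; rewrite h1 h2 eqxx.
Qed.

Lemma Aplus_sub t A : Aplus t A \subset A.
Proof. by apply/subsetP => X; rewrite inE => /andP[]. Qed.

Lemma Aplus_tint t A : t_intersecting t (Aplus t A).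
Proof.
apply/forall_inP => X; rewrite inE => /andP[_ /forall_inP hX].
apply/forall_inP => Y; rewrite inE => /andP[hY _]; apply/implyP => hne.
by have := hX Y hY; rewrite eq_sym hne.
Qed.

Lemma Aplus_lt F t A : A \subset F -> Aminus t A != set0 -> #|Aplus t A| < lFt F t.
Proof.
move=> sAF /set0Pn [X]; rewrite /Aminus inE => /andP[nX XA].
have XnP : X \notin Aplus t A by [].
have <- : #|X |: Aplus t A| = #|Aplus t A|.+1 by rewrite cardsU1 XnP.
apply: lFt_ge.
  by rewrite subUset sub1set (subsetP sAF) // (subset_trans (Aplus_sub _ _)).
apply/forall_inP => Y; rewrite !inE => hY; apply/forall_inP => Z; rewrite !inE => hZ.
apply/implyP => YZ.
case/orP: hY => [/eqP EY | hY]; case/orP: hZ => [/eqP EZ | hZ].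
- by subst; rewrite eqxx in YZ.
- subst Y; move: hZ => /andP[_ /forall_inP hZ].
  by have := hZ X XA; rewrite YZ setIC.
- subst Z; move: hY => /andP[_ /forall_inP hY].
  by have := hY X XA; rewrite eq_sym YZ.
- have hY' : Y \in Aplus t A by rewrite inE.
  have hZ' : Z \in Aplus t A by rewrite inE.
  have := Aplus_tint t A; move/forall_inP/(_ Y hY')/forall_inP/(_ Z hZ').
  by rewrite YZ.
Qed.

Lemma lFt_pos F t : F != set0 -> 0 < lFt F t.
Proof.
case/set0Pn => X XF; rewrite -(cards1 X); apply: lFt_ge; first by rewrite sub1set.
apply/forall_inP => Y; rewrite inE => /eqP ->; apply/forall_inP => Z; rewrite inE => /eqP ->.
by rewrite eqxx.
Qed.

Lemma betaA_pos F t A : F != set0 -> A \subset F -> (0 < betaA F t A)%R.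
Proof.
move=> F0 sAF; rewrite /betaA; case: ifP => h.
  apply: divr_gt0; last by rewrite ltr0n card_gt0.
  by rewrite subr_gt0 ltr_nat; apply: Aplus_lt.
by apply: divr_gt0; rewrite ltr0n ?lFt_pos // card_gt0.
Qed.

Lemma betaF_le F t A : A \subset F -> (betaF F t <= betaA F t A)%R.
Proof.
move=> sAF; rewrite /betaF.
by case: arg_minP => [|B _ hB]; [exact: sub0set | exact: hB].
Qed.

Lemma betaF_pos F t : F != set0 -> (0 < betaF F t)%R.
Proof.
move=> F0; rewrite /betaF.
by case: arg_minP => [|B hB _]; [exact: sub0set | exact: betaA_pos].
Qed.

Lemma card_sum (I : finType) (B : {set I}) : #|B| = \sum_X (X \in B : nat).
Proof. by rewrite -sum1_card big_mkcond; apply: eq_bigr => X _; case: (X \in B). Qed.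

Lemma count_bound t k (As : 'I_k -> {set {set T}}) : cross_tint t As ->
  \sum_(i < k) #|As i| <=
    k * #|Aplus t (\bigcup_(i < k) As i)| + #|Aminus t (\bigcup_(i < k) As i)|.
Proof.
move=> cr; set U := \bigcup_(i < k) As i.
rewrite (eq_bigr _ (fun i _ => card_sum (As i))) exchange_big /=.
rewrite (card_sum (Aplus _ _)) (card_sum (Aminus _ _)) big_distrr -big_split /=.
apply: leq_sum => X _.
have -> : \sum_(i < k) (X \in As i : nat) = #|[set i | X \in As i]|.
  by rewrite card_sum; apply: eq_bigr => i _; rewrite inE.
case: (boolP (X \in Aplus t U)) => hP.
  by rewrite muln1; apply: leq_trans (max_card _) _; rewrite card_ord leq_addr.
rewrite muln0 add0n; case: (boolP (X \in U)) => hU.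
  have hM : X \in Aminus t U by rewrite inE hP hU.
  rewrite hM; move: hP; rewrite inE hU /= => /forall_inPn [Y hYU].
  rewrite negb_imply => /andP[YX nt].
  case/bigcupP: hYU => m _ YAm.
  rewrite -(cards1 m); apply: subset_leq_card; apply/subsetP => i; rewrite !inE => XAi.
  case: (eqVneq i m) => // im.
  by have := cr i m im X Y XAi YAm; rewrite (negbTE nt).
have -> : [set i | X \in As i] = set0.
  apply/setP => i; rewrite !inE; apply/negP => XAi; case/negP: hU.
  by apply/bigcupP; exists i.
by rewrite cards0.
Qed.
End Aux.

Lemma agm_nat k (f : 'I_k -> nat) :
  ((\prod_(i < k) f i)%:R <= ((\sum_(i < k) f i)%:R / k%:R) ^+ k :> rat)%R.
Proof.
have := (@leif_AGM rat 'I_k predT (fun i => (f i)%:R%R) _).1.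
rewrite /= card_ord natr_prod natr_sum; apply => i _; exact: ler0n.
Qed.

Lemma prod_bound k (f : 'I_k -> nat) l : 0 < k ->
  \sum_(i < k) f i <= k * l -> \prod_(i < k) f i <= l ^ k.
Proof.
move=> k0 hs; rewrite -(ler_nat rat) natrX; apply: le_trans (agm_nat f) _.
rewrite ler_pXn2r // ?nnegrE ?ler0n ?divr_ge0 ?ler0n //.
by rewrite ler_pdivrMr ?ltr0n // -natrM ler_nat mulnC.
Qed.

Lemma prod_eq k (f : 'I_k -> nat) l : 0 < k ->
  \prod_(i < k) f i = l ^ k -> k * l <= \sum_(i < k) f i.
Proof.
move=> k0 hp; have := agm_nat f; rewrite hp natrX.
rewrite ler_pXn2r // ?nnegrE ?ler0n ?divr_ge0 ?ler0n //.
by rewrite ler_pdivlMr ?ltr0n // -natrM ler_nat mulnC.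
Qed.

Lemma all_eq k (f : 'I_k -> nat) l : (forall i, f i <= l) ->
  \sum_(i < k) f i = k * l -> forall i, f i = l.
Proof.
move=> hf hs i; apply/eqP; rewrite eqn_leq hf /= leqNgt; apply/negP => lt.
have hc : \sum_(j < k) l = k * l by rewrite sum_nat_const card_ord.
move: hs; rewrite -hc (bigD1 i) //= [in RHS](bigD1 i) //=.
have : \sum_(j < k | j != i) f j <= \sum_(j < k | j != i) l by apply: leq_sum.
move=> h1 h2; move: h1; rewrite leqNgt; apply/negP; rewrite -(ltn_add2l (f i)) h2 ltn_add2r negbK; exact: lt.
Qed.

Theorem theorem1p1 (T : finType) (t k : nat) (F : {set {set T}})
    (As : 'I_k -> {set {set T}}) :
  1 <= t -> 1 <= k -> t <= alpha F ->
  (forall i, As i \subset F) ->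
  cross_tint t As ->
  ((kappa F t <= k%:R)%R ->
     [/\ \sum_(i < k) #|As i| <= k * lFt F t,
         \prod_(i < k) #|As i| <= lFt F t ^ k &
         exists L : {set {set T}}, [/\ largest_tint F t L,
                       cross_tint t (fun _ : 'I_k => L),
                       \sum_(i < k) #|L| = k * lFt F t &
                       \prod_(i < k) #|L| = lFt F t ^ k]])
  /\
  ((kappa F t < k%:R)%R ->
     (\sum_(i < k) #|As i| = k * lFt F t ->
        exists L : {set {set T}}, largest_tint F t L /\ forall i, As i = L) /\
     (\prod_(i < k) #|As i| = lFt F t ^ k ->
        exists L : {set {set T}}, largest_tint F t L /\ forall i, As i = L)).
Proof.
move=> t1 k1 tal sub cr.
have F0 : F != set0.
  by apply/negP => /eqP F0; move: tal; rewrite /alpha F0 big_set0; lia.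
set U := \bigcup_(i < k) As i.
set l := lFt F t.
have sUF : U \subset F by apply/bigcupsP => i _; exact: sub i.
have aP : #|Aplus t U| <= l.
  by apply: lFt_ge; [exact: subset_trans (Aplus_sub _ _) sUF | exact: Aplus_tint].
have cb : \sum_(i < k) #|As i| <= k * #|Aplus t U| + #|Aminus t U| := count_bound cr.
have bpos := betaF_pos t F0.
have bU := betaF_le t sUF.
have H1 : (1 <= k%:R * betaF F t)%R -> Aminus t U != set0 ->
    #|Aminus t U| <= k * (l - #|Aplus t U|).
  move=> hk hm; have : (1 <= k%:R * betaA F t U)%R.
    by apply: le_trans hk _; rewrite ler_pM2l ?ltr0n.
  by rewrite /betaA hm mulrA ler_pdivlMr ?ltr0n ?card_gt0 // mul1r -natrB // -natrM ler_nat.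
have H2 : (1 < k%:R * betaF F t)%R -> Aminus t U != set0 ->
    #|Aminus t U| < k * (l - #|Aplus t U|).
  move=> hk hm; have : (1 < k%:R * betaA F t U)%R.
    by apply: lt_le_trans hk _; rewrite ler_pM2l ?ltr0n.
  by rewrite /betaA hm mulrA ltr_pdivlMr ?ltr0n ?card_gt0 // mul1r -natrB // -natrM ltr_nat.
have Hsum : (1 <= k%:R * betaF F t)%R -> \sum_(i < k) #|As i| <= k * l.
  move=> hk; case: (eqVneq (Aminus t U) set0) => hm.
    have : #|Aminus t U| = 0 by rewrite hm cards0.
    nia.
  have := H1 hk hm; nia.
have Heq : (1 < k%:R * betaF F t)%R -> \sum_(i < k) #|As i| = k * l ->
    exists L : {set {set T}}, largest_tint F t L /\ forall i, As i = L.
  move=> hk hs.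
  have hm : Aminus t U = set0.
    by case: (eqVneq (Aminus t U) set0) => // hm; have := H2 hk hm; nia.
  have sUP : U \subset Aplus t U by rewrite -setD_eq0; apply/eqP.
  have Ul : #|U| <= l by apply: leq_trans (subset_leq_card sUP) aP.
  have hAi i : #|As i| <= l.
    by apply: leq_trans Ul; apply: subset_leq_card; apply: (bigcup_sup i).
  have eqi := all_eq hAi hs.
  have Ueq : #|U| = l.
    apply/eqP; rewrite eqn_leq Ul -(eqi (Ordinal k1)).
    by apply: subset_leq_card; apply: (bigcup_sup (Ordinal k1)).
  exists U; split.
    rewrite /largest_tint sUF Ueq eqxx andbT.
    have -> : U = Aplus t U by apply/eqP; rewrite eqEsubset sUP Aplus_sub.
    exact: Aplus_tint.
  move=> i; apply/eqP; rewrite eqEcard eqi Ueq leqnn andbT.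
  exact: (bigcup_sup i).
split.
  move=> hk0.
  have hk : (1 <= k%:R * betaF F t)%R.
    move: hk0; rewrite /kappa => h.
    by rewrite -(ler_pM2r bpos) mulVf ?gt_eqF in h.
  have hsum := Hsum hk.
  split => //; first exact: prod_bound.
  have [L [hL hLc]] : exists L, largest_tint F t L /\ cross_tint t (fun _ : 'I_k => L).
    case: (lFt_attain F t) => L hL; case: (leqP 2 l) => hl.
      exists L; split => // i j _ X Y XL YL.
      move: (hL) => /and3P[_ /forall_inP tL /eqP cL].
      case: (eqVneq X Y) => [<-|XY]; last first.
        by move: (tL X XL) => /forall_inP/(_ Y YL); rewrite XY.
      have /set0Pn [Z] : L :\ X != set0.
        by rewrite -card_gt0; move: hl; rewrite /l -cL (cardsD1 X L) XL.
      rewrite !inE => /andP[ZX ZL].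
      rewrite setIid; move: (tL Z ZL) => /forall_inP/(_ X XL); rewrite ZX /= => h.
      by apply: leq_trans h _; apply: subset_leq_card; apply: subsetIr.
    have cF : 0 < #|F| by rewrite card_gt0.
    have [X0 X0F hX0] := bigop.eq_bigmax_cond (fun X : {set T} => #|X|) cF.
    exists [set X0]; split.
      rewrite /largest_tint sub1set X0F cards1 /=; apply/andP; split.
        apply/forall_inP => Y; rewrite inE => /eqP ->; apply/forall_inP => Z.
        by rewrite inE => /eqP ->; rewrite eqxx.
      by apply/eqP; have := lFt_pos t F0; rewrite -/l; lia.
    move=> i j _ X Y; rewrite !inE => /eqP -> /eqP ->.
    by rewrite setIid -hX0.
  move: (hL) => /and3P[_ _ /eqP cL].
  exists L; split => //.
    by rewrite sum_nat_const card_ord cL.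
  by rewrite prod_nat_const card_ord cL.
move=> hk0.
have hk : (1 < k%:R * betaF F t)%R.
  move: hk0; rewrite /kappa => h.
  by rewrite -(ltr_pM2r bpos) mulVf ?gt_eqF in h.
split; first exact: Heq.
move=> hp; apply: Heq => //; apply/eqP; rewrite eqn_leq prod_eq // andbT.
by apply: Hsum; apply: ltW.
Qed.
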